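(* In the setting below, let $u\ne v$ in $V$ satisfy $\ell_u\ell_v c_{u,v}^2\le 1/16$. Then for every integer $k\ge184$, $$\nu\big(k_{u,v}(P)+k_{v,u}(P)=k+1\big)\le\frac12\,\nu\big(k_{u,v}(P)+k_{v,u}(P)=k-1\big).$$
   Context: Let $G=G(V)$ be a finite connected network with symmetric conductances $c_{x,y}\ge0$, $c_x=\sum_yc_{x,y}$; $v_0\in V$; $\ell_w>0$ for $w\in V$, $t=\ell_{v_0}$, $\Gamma=\{L^w_{\tau(t)}=\ell_w\text{ for }w\ne v_0\}$. The continuous-time walk started at $v_0$ jumps from $x$ to $y$ with probability $c_{x,y}/c_x$ after i.i.d. mean-one exponential holding times; $L^w_s=\frac1{c_w}\int_0^s\mathbf 1_{\{X_r=w\}}dr$; $\tau(t)=\inf\{s:L^{v_0}_s>t\}$. $\mathcal P$ is the embedded jump path up to $\tau(t)$; $\Omega$ is the set of paths from $v_0$ to $v_0$ visiting every vertex; $k_{x,y}(P)$ counts traversals of directed edge $\langle x,y\rangle$. $\nu$ is the conditional law of $\mathcal P$ given $\Gamma$ on $\Omega$: $\nu(A)=\sum_{P\in A}\mu(\mathcal P=P,\Gamma)/\sum_{P\in\Omega}\mu(\mathcal P=P,\Gamma)$, with $\mu(\mathcal P=P,\Gamma)=\mathbb P(\mathcal P=P)f_P$ and $f_P$ the conditional density of $(L^w_{\tau(t)})_{w\ne v_0}$ at $(\ell_w)_{w\ne v_0}$ given $\mathcal P=P$. *)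

(* Defs.v *)
From HB Require Import structures.
From mathcomp Require Import all_boot all_order all_algebra.
From mathcomp Require Import all_classical all_reals all_analysis.
Set Implicit Arguments. Unset Strict Implicit. Unset Printing Implicit Defensive.
Import Order.TTheory GRing.Theory Num.Theory.
Local Open Scope ring_scope.
Local Open Scope classical_set_scope.

Section Network.
Variables (R : realType) (V : finType).
Variable c : V -> V -> R.
Variable v0 : V.
Variable l : V -> R.          (* target local times l_w; t = l v0 *)

Definition cond (x : V) : R := \sum_(y : V) c x y.

(* A path is the sequence of visited vertices [x_0; x_1; ...; x_m]. *)
Definition steps (P : seq V) : seq (V * V) := zip P (behead P).

Definition kxy (x y : V) (P : seq V) : nat := count (pred1 (x, y)) (steps P).

Definition nvis (w : V) (P : seq V) : nat := count_mem w P.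

Definition Omega : set (seq V) :=
  [set P | match P with
           | [::] => false
           | x0 :: p => [&& x0 == v0, path (fun a b : V => 0 < c a b) x0 p,
                          last x0 p == v0 & all (fun w => w \in P) (enum V)]
           end].

Definition jump_prob (P : seq V) : R :=
  \prod_(e <- steps P) (c e.1 e.2 / cond e.1).

Definition poisson_pmf (lam : R) (n : nat) : R :=
  expR (- lam) * lam ^+ n / (n`!)%:R.

(* density at x of the Gamma(shape n, rate r) law, i.e. of the sum of n i.i.d.
   Exp(1) variables divided by r; for n = 0 the law is the Dirac mass at 0,
   whose density at x > 0 is 0. *)
Definition gamma_density (n : nat) (r x : R) : R :=
  if n is n'.+1 then r ^+ n * x ^+ n' * expR (- (r * x)) / (n'`!)%:R else 0.

(* P(𝒫 = P) for P from v0 to v0: the jump chain follows P, and the local time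
   at v0 first exceeds t = l v0 during the last (nvis v0 P)-th visit to v0,
   i.e. exactly nvis v0 P - 1 of the i.i.d. Exp(1) holding times at v0 complete
   before c_{v0} t (a Poisson count). *)
Definition path_prob (P : seq V) : R :=
  jump_prob P * poisson_pmf (cond v0 * l v0) (nvis v0 P).-1.

(* f_P: conditional density of (L^w_{tau(t)})_{w <> v0} at (l_w)_{w <> v0}
   given 𝒫 = P; given the path, L^w is the sum of nvis w P i.i.d. Exp(1)
   holding times divided by c_w, independently over w. *)
Definition fP (P : seq V) : R :=
  \prod_(w : V | w != v0) gamma_density (nvis w P) (cond w) (l w).

Definition mu_joint (P : seq V) : R := path_prob P * fP P.

Definition nu (A : set (seq V)) : R :=
  fine (\esum_(P in A `&` Omega) (mu_joint P)%:E) /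
  fine (\esum_(P in Omega) (mu_joint P)%:E).

End Network.

(* Main.v *)
Require Import Defs.
From HB Require Import structures.
From mathcomp Require Import all_boot all_order all_algebra.
From mathcomp Require Import all_classical all_reals all_analysis.
From Stdlib Require Import Lia.
From mathcomp Require Import zify ring lra.
Import Order.TTheory GRing.Theory Num.Theory.
Local Open Scope ring_scope.
Local Open Scope classical_set_scope.

Section Seqs.
Variable V : finType.
Local Set Implicit Arguments.
Local Unset Strict Implicit.
Implicit Types (A B S R s t : seq V) (a b x y : V).

Definition swp (e : V * V) := (e.2, e.1).

Lemma steps_cons2 a b s : steps (a :: b :: s) = (a, b) :: steps (b :: s).
Proof. by []. Qed.

Lemma steps_cat s1 x s2 :
  steps (s1 ++ x :: s2) = steps (rcons s1 x) ++ steps (x :: s2).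
Proof.
elim: s1 => [|a s1 IH] //=.
case: s1 IH => [|b s1] IH //=.
by rewrite /steps /= in IH *; rewrite IH.
Qed.

Lemma steps_rev s : steps (rev s) = rev (map swp (steps s)).
Proof.
elim: s => [|x s IH] //.
case: s IH => [|y s] IH //.
rewrite steps_cons2 rev_cons -cats1 (_ : rev (y :: s) = rcons (rev s) y);
  last by rewrite rev_cons.
rewrite -cats1 -catA /= steps_cat -rev_cons IH /=.
by rewrite rev_cons -cats1.
Qed.


Definition tt A a b S B := A ++ a :: b :: S ++ a :: b :: B.
Definition ss A a b S B := A ++ a :: rev S ++ b :: B.

Lemma steps_tt A a b S B : steps (tt A a b S B) =
  steps (rcons A a) ++ (a, b) :: steps (rcons (b :: S) a) ++ (a, b) :: steps (b :: B).
Proof.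
rewrite /tt steps_cat steps_cons2 -cat_cons steps_cat steps_cons2.
by [].
Qed.

Lemma steps_ss A a b S B : steps (ss A a b S B) =
  steps (rcons A a) ++ rev (map swp (steps (rcons (b :: S) a))) ++ steps (b :: B).
Proof.
rewrite /ss steps_cat -cat_cons steps_cat -steps_rev.
by rewrite rev_rcons rev_cons.
Qed.

Lemma count_tt (p : pred (V * V)) A a b S B : (forall e, p (swp e) = p e) ->
  count p (steps (tt A a b S B)) = (count p (steps (ss A a b S B)) + (p (a, b)).*2)%N.
Proof.
move=> ps; rewrite steps_tt steps_ss !count_cat /= count_rev count_map.
rewrite (eq_count (a2 := p)); last by move=> e /=; rewrite ps.
rewrite count_cat /= -addnn; lia.
Qed.

Lemma all_tt (p : pred (V * V)) A a b S B : (forall e, p (swp e) = p e) ->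
  all p (steps (tt A a b S B)) = p (a, b) && all p (steps (ss A a b S B)).
Proof.
move=> ps; rewrite steps_tt steps_ss !all_cat /= all_rev all_map.
rewrite (eq_all (a2 := p)); last by move=> e /=; rewrite ps.
rewrite all_cat /=.
by case: (p (a, b)); case: (all p (steps (rcons A a))); case: (all p (steps (b :: rcons S a))); case: (all p (steps (b :: B))).
Qed.

Lemma mem_tt A a b S B w : (w \in tt A a b S B) = (w \in ss A a b S B).
Proof.
rewrite /tt /ss !(mem_cat, inE, mem_rev).
by case: (w \in A); case: (w == a); case: (w == b); case: (w \in S); case: (w \in B).
Qed.

Lemma cnt_tt A a b S B w : count_mem w (tt A a b S B) =
   (count_mem w (ss A a b S B) + (a == w) + (b == w))%N.
Proof.
rewrite /tt /ss !(count_cat, count_rev) /= !(count_cat, count_rev) /=.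
by case: (a == w); case: (b == w); rewrite /= ?add0n; lia.
Qed.

Lemma head_cat x0 A a L : head x0 (A ++ a :: L) = head a A.
Proof. by case: A. Qed.

Lemma last_tt x0 A a b S B : last x0 (tt A a b S B) = last b B.
Proof. by rewrite /tt last_cat /= last_cat. Qed.

Lemma last_ss x0 A a b S B : last x0 (ss A a b S B) = last b B.
Proof. by rewrite /ss last_cat /= last_cat. Qed.

Lemma head_tt x0 A a b S B : head x0 (tt A a b S B) = head a A.
Proof. by rewrite /tt head_cat. Qed.

Lemma head_ss x0 A a b S B : head x0 (ss A a b S B) = head a A.
Proof. by rewrite /ss head_cat. Qed.


Lemma split1 x y t : (0 < count (pred1 (x, y)) (steps t))%N ->
  exists A B, t = A ++ x :: y :: B.
Proof.
elim: t => [|a t IH] //.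
case: t IH => [|b t] IH //.
rewrite steps_cons2 /=.
case: eqP => [[-> ->] _|_ /= H]; first by exists [::], t.
have [A [B ->]] := IH H.
by exists (a :: A), B.
Qed.

Lemma split2 x y t : x != y -> (1 < count (pred1 (x, y)) (steps t))%N ->
  exists A S B, t = tt A x y S B.
Proof.
move=> xy.
elim: t => [|a t IH] //.
case: t IH => [|b t] IH //.
rewrite steps_cons2 /=.
case: eqP => [[-> ->] /= H|_ /= H].
  have H1 : (0 < count (pred1 (x, y)) (steps (y :: t)))%N by rewrite add1n ltnS in H.
  have [A' [B' E]] := split1 H1.
  case: A' E => [[E]|a' S [E1 E2]]; first by rewrite E eqxx in xy.
  by exists [::], S, B'; rewrite /tt /= E2 E1.
have [A [S [B ->]]] := IH H.
by exists (a :: A), S, B.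
Qed.

Definition reb2 x0 s i j :=
  tt (take i s) (nth x0 s i) (nth x0 s j) (rev (take (j - i.+1) (drop i.+1 s)))
     (drop j.+1 s).

Lemma ss_decomp x0 s i j : (i < j)%N -> (j < size s)%N ->
  s = ss (take i s) (nth x0 s i) (nth x0 s j) (rev (take (j - i.+1) (drop i.+1 s)))
     (drop j.+1 s).
Proof.
move=> ij js; rewrite /ss revK.
rewrite -{1}(cat_take_drop i s); congr (_ ++ _).
rewrite (drop_nth x0) ?(ltn_trans ij js) //; congr (_ :: _).
rewrite -{1}(cat_take_drop (j - i.+1) (drop i.+1 s)); congr (_ ++ _).
rewrite drop_drop subnK // (drop_nth x0) //.
Qed.

Lemma ss_pos x0 A a b S B :
  let s := ss A a b S B in
  let i := size A in let j := (size A + (size S).+1)%N in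
  [/\ (i < j)%N, (j < size s)%N, nth x0 s i = a, nth x0 s j = b &
      reb2 x0 s i j = tt A a b S B].
Proof.
move=> s i j; rewrite /s /i /j /ss.
have Ha : nth x0 (A ++ a :: rev S ++ b :: B) (size A) = a.
  by rewrite nth_cat ltnn subnn.
have Hb : nth x0 (A ++ a :: rev S ++ b :: B) (size A + (size S).+1) = b.
  rewrite nth_cat ifF; last lia.
  by rewrite addKn /= nth_cat size_rev ltnn subnn.
split => //.
- lia.
- rewrite size_cat /= size_cat /= size_rev; lia.
- rewrite /reb2 Ha Hb take_size_cat //.
  rewrite (_ : (size A + (size S).+1 - (size A).+1 = size S)%N); last lia.
  rewrite -cat_rcons drop_size_cat ?size_rcons // take_size_cat ?size_rev // revK.
  rewrite (_ : (size A + (size S).+1).+1 = size (A ++ a :: rev S ++ [:: b]))%N;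
    last by rewrite !size_cat /= size_cat size_rev /=; lia.
  rewrite (_ : rcons A a ++ rev S ++ b :: B = (A ++ a :: rev S ++ [:: b]) ++ B).
    by rewrite drop_size_cat.
  by rewrite -!catA /= -catA /= -cats1 -catA.
Qed.

End Seqs.
Arguments swp {V}.
Arguments tt {V}.
Arguments ss {V}.
Arguments reb2 {V}.

Section Real.
Variables (R : realType) (V : finType) (c : V -> V -> R) (v0 : V) (l : V -> R).
Hypothesis c_sym : forall x y, c x y = c y x.
Hypothesis c_ge0 : forall x y, 0 <= c x y.
Hypothesis l_gt0 : forall w, 0 < l w.

Local Notation cd := (cond c).
Definition Cp (P : seq V) := \prod_(e <- steps P) c e.1 e.2.
Definition srcs (P : seq V) := map fst (steps P).
Definition Z w n := if w == v0 then Defs.poisson_pmf (cd v0 * l v0) n.-1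
                    else gamma_density n (cd w) (l w).
Definition Y w n := (cd w)^-1 ^+ (n - (v0 == w)) * Z w n.

Lemma srcs_count x p w :
  (count_mem w (srcs (x :: p)) + (last x p == w) = count_mem w (x :: p))%N.
Proof.
elim: p x => [|y p IH] x; first by rewrite /srcs /= addn0.
rewrite /srcs steps_cons2 /=.
rewrite -addnA; congr (_ + _)%N; exact: IH.
Qed.

Lemma prod_count (F : V -> R) (s : seq V) :
  \prod_(x <- s) F x = \prod_w F w ^+ count_mem w s.
Proof.
elim: s => [|x s IH]; first by rewrite big_nil big1.
rewrite big_cons IH /= [in RHS](eq_bigr (fun w => F w ^+ (x == w) * F w ^+ count_mem w s)); last by move=> w _; rewrite exprD.
rewrite big_split /=; congr (_ * _).
rewrite (bigD1 x) //= eqxx expr1 big1 ?mulr1 // => w /negbTE.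
by rewrite eq_sym => ->.
Qed.

Lemma mu_form P : P != [::] -> last v0 P = v0 ->
  mu_joint c v0 l P = Cp P * \prod_w Y w (nvis w P).
Proof.
case: P => [//|x p] _ /= hl.
rewrite /mu_joint /path_prob /jump_prob /fP.
have cnt w : count_mem w (srcs (x :: p)) = (nvis w (x :: p) - (v0 == w))%N.
  by rewrite /nvis -srcs_count /= hl addnK.
rewrite (eq_bigr (fun e => c e.1 e.2 * (cd e.1)^-1)) //.
rewrite big_split /= -/(Cp _) -!mulrA; congr (_ * _).
rewrite -(big_map fst xpredT (fun x => (cd x)^-1)) -/(srcs _) prod_count.
rewrite /Y big_split /=; congr (_ * _).
  by apply: eq_bigr => w _; rewrite cnt.
rewrite [RHS](bigD1 v0) //= {1}/Z eqxx /Defs.poisson_pmf -!mulrA.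
congr (_ * (_ * (_ * _))).
by apply: eq_bigr => w /negbTE wv; rewrite /Z wv.
Qed.


Lemma fact_neq0 n : (n`!)%:R != 0 :> R.
Proof. by rewrite pnatr_eq0 -lt0n fact_gt0. Qed.

Lemma Z_rec w n : (0 < n)%N -> Z w n.+1 * n%:R = cd w * l w * Z w n.
Proof.
case: n => [//|m] _; rewrite /Z.
case: eqP => [->|_] /=.
  rewrite /Defs.poisson_pmf factS natrM.
  have h1 := fact_neq0 m.
  have h2 : (m.+1)%:R != 0 :> R by rewrite pnatr_eq0.
  rewrite exprS; field; by rewrite nat1r h1 h2.
rewrite /gamma_density /= factS natrM.
have h1 := fact_neq0 m.
have h2 : (m.+1)%:R != 0 :> R by rewrite pnatr_eq0.
rewrite !exprS; field; by rewrite nat1r h1 h2.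
Qed.

Lemma Y_rec w n : cd w != 0 -> (0 < n)%N -> Y w n.+1 * n%:R = l w * Y w n.
Proof.
move=> cw n0; rewrite /Y -mulrA Z_rec //.
have -> : (n.+1 - (v0 == w) = (n - (v0 == w)).+1)%N.
  by case: (v0 == w) => /=; lia.
rewrite exprS; field.
by [].
Qed.


Lemma prod_tt (f : V * V -> R) A a b S B : (forall e, f (swp e) = f e) ->
  \prod_(e <- steps (tt A a b S B)) f e =
  f (a, b) ^+ 2 * \prod_(e <- steps (ss A a b S B)) f e.
Proof.
move=> fs; rewrite steps_tt steps_ss !big_cat !big_cons /= big_cat /= big_cons big_rev big_map.
have -> : forall L, \prod_(j <- L) f (swp j) = \prod_(j <- L) f j.
  by move=> L; apply: eq_bigr => e _; rewrite fs.
rewrite expr2; ring.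
Qed.

Lemma prod2 (F : V -> R) u v : u != v ->
  \prod_w F w = F u * F v * \prod_(w | (w != u) && (w != v)) F w.
Proof.
move=> uv; rewrite (bigD1 u) //= (bigD1 v) /=; last by rewrite eq_sym.
by rewrite mulrA.
Qed.

Lemma ss_neq0 A a b S B : ss A a b S B != [::] :> seq V.
Proof. by case: A. Qed.
Lemma tt_neq0 A a b S B : tt A a b S B != [::] :> seq V.
Proof. by case: A. Qed.

Lemma ratio u v A a b S B : u != v ->
  ((a == u) && (b == v)) || ((a == v) && (b == u)) ->
  last v0 (ss A a b S B) = v0 -> cd u != 0 -> cd v != 0 ->
  (0 < nvis u (ss A a b S B))%N -> (0 < nvis v (ss A a b S B))%N ->
  mu_joint c v0 l (tt A a b S B) *
    ((nvis u (ss A a b S B))%:R * (nvis v (ss A a b S B))%:R) =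
  c u v ^+ 2 * l u * l v * mu_joint c v0 l (ss A a b S B).
Proof.
move=> uv hab hl cu cv nu0 nv0.
have hl' : last v0 (tt A a b S B) = v0 by rewrite last_tt; rewrite last_ss in hl.
rewrite !mu_form ?ss_neq0 ?tt_neq0 //.
have cab : c a b = c u v.
  by case/orP: hab => /andP[/eqP -> /eqP ->] //; rewrite c_sym.
rewrite /Cp prod_tt; last by move=> e; rewrite /swp /= c_sym.
rewrite /= cab.
have nt w : nvis w (tt A a b S B) = (nvis w (ss A a b S B) + (u == w) + (v == w))%N.
  rewrite /nvis cnt_tt.
  by case/orP: hab => /andP[/eqP -> /eqP ->] //; rewrite addnAC.
rewrite (prod2 _ u v uv) [X in _ = _ * (_ * X)](prod2 _ u v uv).
rewrite !nt eqxx (negbTE uv) eq_sym (negbTE uv) eqxx !addn0 !addn1.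
rewrite (eq_bigr (fun w => Y w (nvis w (ss A a b S B)))); last first.
  move=> w /andP[wu wv]; rewrite nt.
  by rewrite eq_sym (negbTE wu) eq_sym (negbTE wv) !addn0.
set nu := nvis u _; set nv := nvis v _.
set P := \prod_(i | _) _.
transitivity (c u v ^+ 2 * Cp (ss A a b S B) * ((Y u nu.+1 * nu%:R) * (Y v nv.+1 * nv%:R)) * P).
  rewrite /Cp; ring.
rewrite !Y_rec //; rewrite /Cp; ring.
Qed.


Lemma cd_ge0 w : 0 <= cd w.
Proof. by apply: sumr_ge0 => y _. Qed.

Lemma mu_ge0 P : 0 <= mu_joint c v0 l P.
Proof.
rewrite /mu_joint /path_prob /jump_prob /fP /Defs.poisson_pmf.
have hl w : 0 <= l w by apply: ltW.
apply: mulr_ge0; [apply: mulr_ge0|].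
- by apply: prodr_ge0 => e _; apply: divr_ge0 => //; apply: cd_ge0.
- apply: mulr_ge0; [apply: mulr_ge0|]; first exact: expR_ge0.
    by apply: exprn_ge0; apply: mulr_ge0 => //; apply: cd_ge0.
  by rewrite invr_ge0.
- apply: prodr_ge0 => w _; rewrite /gamma_density.
  case: (nvis w P) => [|n] //.
  apply: mulr_ge0; last by rewrite invr_ge0.
  apply: mulr_ge0; last exact: expR_ge0.
  by apply: mulr_ge0; apply: exprn_ge0 => //; apply: cd_ge0.
Qed.

End Real.

Section Om.
Variables (R : realType) (V : finType) (c : V -> V -> R) (v0 : V).
Hypothesis c_sym : forall x y, c x y = c y x.

Definition omb (P : seq V) := [&& P != [::], head v0 P == v0, last v0 P == v0,
  all (fun e => 0 < c e.1 e.2) (steps P) & all (fun w => w \in P) (enum V)].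

Lemma path_steps (r : rel V) x p : path r x p = all (fun e => r e.1 e.2) (steps (x :: p)).
Proof.
elim: p x => [|y p IH] x //=.
by rewrite IH.
Qed.

Lemma OmegaE P : Omega c v0 P <-> omb P.
Proof.
case: P => [|x p] //=.
rewrite /Omega /omb /= path_steps.
by case: (x == v0); case: all; case: (last x p == v0).
Qed.

Lemma omb_tt A a b S B : 0 < c a b -> omb (tt A a b S B) = omb (ss A a b S B).
Proof.
move=> cab; rewrite /omb tt_neq0 ss_neq0 head_tt head_ss last_tt last_ss.
rewrite all_tt; last by move=> e; rewrite /swp /= c_sym.
rewrite cab /=; congr [&& _, _, _ & _].
by apply: eq_all => w; rewrite mem_tt.
Qed.

Lemma omb_ss A a b S B : omb (tt A a b S B) -> omb (ss A a b S B).
Proof.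
rewrite /omb ss_neq0 head_tt head_ss last_tt last_ss /=.
rewrite all_tt; last by move=> e; rewrite /swp /= c_sym.
case/and5P => _ -> -> /andP[_ ->] H /=.
by rewrite -(eq_all (a1 := fun w => w \in tt A a b S B)) // => w; rewrite mem_tt.
Qed.

End Om.

Section Main.
Variables (R : realType) (V : finType) (c : V -> V -> R) (v0 : V) (l : V -> R).
Hypothesis c_sym : forall x y, c x y = c y x.
Hypothesis c_ge0 : forall x y, 0 <= c x y.
Hypothesis l_gt0 : forall w, 0 < l w.
Variables (u v : V).
Hypothesis huv : u != v.
Variable k : nat.
Hypothesis hk : (2 <= k)%N.

Definition symp (e : V * V) := (e == (u, v)) || (e == (v, u)).

Lemma kk P : (kxy u v P + kxy v u P = count symp (steps P))%N.
Proof.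
rewrite /kxy -count_predUI.
rewrite (eq_count (a1 := predI _ _) (a2 := pred0)) ?count_pred0 ?addn0 //.
move=> e /=; apply/andP => -[/eqP -> /eqP [] /eqP].
by rewrite (negbTE huv).
Qed.

Lemma symp_swp e : symp (swp e) = symp e.
Proof.
case: e => x y; rewrite /symp /swp /= !xpair_eqE.
by case: (x == u); case: (x == v); case: (y == u); case: (y == v).
Qed.

Lemma kk_tt A a b S B : symp (a, b) ->
  (kxy u v (tt A a b S B) + kxy v u (tt A a b S B) =
   (kxy u v (ss A a b S B) + kxy v u (ss A a b S B)).+2)%N.
Proof.
move=> sab; rewrite !kk count_tt; last exact: symp_swp.
by rewrite sab addn2.
Qed.

Definition Aset := [set P | (kxy u v P + kxy v u P = k.+1)%N] `&` Omega c v0.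
Definition Bset := [set P | (kxy u v P + kxy v u P = k.-1)%N] `&` Omega c v0.
Definition Pw (s : seq V) w := [set p : nat | (p < size s)%N && (nth v0 s p == w)].
Definition Xset := Bset `*`` (fun s => Pw s u `*`` (fun _ => Pw s v)).
Definition reb (x : seq V * (nat * nat)) :=
  reb2 v0 x.1 (minn x.2.1 x.2.2) (maxn x.2.1 x.2.2).

Lemma exE t : Aset t -> exists x, Xset x /\ reb x = t.
Proof.
move=> [/= ht /OmegaE ot].
have [h2|h2] : (1 < kxy u v t)%N \/ (1 < kxy v u t)%N by lia.
- have [A [S [B E]]] := split2 huv h2.
  have [ij js hi hj hr] := ss_pos v0 A u v S B.
  exists (ss A u v S B, (size A, (size A + (size S).+1)%N)).
  split; last by rewrite /reb /= (minn_idPl (ltnW ij)) (maxn_idPr (ltnW ij)) hr E.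
  split; [split|split].
  + move: ht; rewrite E /= kk_tt; last by rewrite /symp eqxx.
    by case => <-.
  + apply/OmegaE.
    by apply: (@omb_ss _ _ c v0 c_sym); rewrite -E.
  + by rewrite /Pw /= hi eqxx (ltn_trans ij js).
  + by rewrite /Pw /= hj eqxx js.
- have hvu : v != u by rewrite eq_sym.
  have [A [S [B E]]] := split2 hvu h2.
  have [ij js hi hj hr] := ss_pos v0 A v u S B.
  exists (ss A v u S B, ((size A + (size S).+1)%N, size A)).
  split; last by rewrite /reb /= (minn_idPr (ltnW ij)) (maxn_idPl (ltnW ij)) hr E.
  split; [split|split].
  + move: ht; rewrite E /= kk_tt; last by rewrite /symp eqxx orbT.
    by case => <-.
  + apply/OmegaE.
    by apply: (@omb_ss _ _ c v0 c_sym); rewrite -E.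
  + by rewrite /Pw /= hj eqxx js.
  + by rewrite /Pw /= hi eqxx (ltn_trans ij js).
Qed.

Lemma cd_pos w w' : 0 < c w w' -> 0 < cond c w.
Proof.
move=> h; rewrite /cond (bigD1 w') //=.
apply: (lt_le_trans h); rewrite lerDl; exact: sumr_ge0.
Qed.

Lemma exM x : Xset x -> 0 < c u v ->
  mu_joint c v0 l (reb x) * ((nvis u x.1)%:R * (nvis v x.1)%:R) =
  c u v ^+ 2 * l u * l v * mu_joint c v0 l x.1.
Proof.
case: x => s [p q] [[_ /OmegaE os] [/andP[ps /eqP pu] /andP[qs /eqP qv]]] cuv /=.
have pq : p != q by apply: contraNneq huv => E; rewrite -pu -qv E.
have ij : (minn p q < maxn p q)%N.
  move: pq; rewrite neq_ltn => /orP[h|h].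
    by rewrite (minn_idPl (ltnW h)) (maxn_idPr (ltnW h)).
  by rewrite (minn_idPr (ltnW h)) (maxn_idPl (ltnW h)).
have js : (maxn p q < size s)%N by rewrite gtn_max ps qs.
have hab : ((nth v0 s (minn p q) == u) && (nth v0 s (maxn p q) == v)) ||
           ((nth v0 s (minn p q) == v) && (nth v0 s (maxn p q) == u)).
  move: pq; rewrite neq_ltn => /orP[h|h].
    by rewrite (minn_idPl (ltnW h)) (maxn_idPr (ltnW h)) pu qv !eqxx.
  by rewrite (minn_idPr (ltnW h)) (maxn_idPl (ltnW h)) pu qv !eqxx orbT.
have nu0 : (0 < nvis u s)%N by rewrite /nvis -has_count has_pred1 -pu mem_nth.
have nv0 : (0 < nvis v s)%N by rewrite /nvis -has_count has_pred1 -qv mem_nth.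
have Es := ss_decomp v0 ij js.
rewrite /reb /reb2 /=.
move: hab nu0 nv0 os.
set A := take _ s; set a := nth v0 s _; set b := nth v0 s _.
set S := rev _; set B := drop _ s.
rewrite {}Es => hab nu0 nv0 os.
move/and5P: os => [_ _ /eqP hl _ _].
apply: ratio => //.
- by rewrite gt_eqF //; apply: cd_pos cuv.
- by rewrite gt_eqF //; apply: (@cd_pos v u); rewrite c_sym.
Qed.

Local Open Scope ereal_scope.

Lemma sum_const_cnt (r : seq nat) (P : pred nat) (al : R) :
  (\sum_(i <- r | P i) al = (count P r)%:R * al)%R.
Proof.
elim: r => [|x r IH]; first by rewrite big_nil mul0r.
rewrite big_cons IH /=; case: (P x) => /=; last by rewrite add0n.
by rewrite natrD mulrDl mul1r.
Qed.

Lemma esum_count s w (al : R) : (0 <= al)%R ->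
  \esum_(p in Pw s w) al%:E = ((nvis w s)%:R * al)%:E.
Proof.
move=> al0.
have := @nneseries_esum R (fun _ : nat => al%:E)
   (fun p => (p < size s)%N && (nth v0 s p == w)).
rewrite /Pw => <-; last by move=> n _; rewrite lee_fin.
rewrite (nneseries_split_cond _ (size s)); last by move=> *; rewrite lee_fin.
rewrite eseries0 ?adde0; last by move=> i /= hi; rewrite add0n in hi; rewrite ltnNge hi.
rewrite add0n sumEFin sum_const_cnt; congr ((_%:R * _)%:E).
rewrite /index_iota subn0 /nvis.
rewrite (@eq_in_count _ _ (fun p => nth v0 s p == w)); last first.
  by move=> p; rewrite mem_iota /= add0n => ->.
by rewrite -{3}(mkseq_nth v0 s) /mkseq count_map.
Qed.

Lemma esumZ_le (T : choiceType) (I : set T) (f : T -> R) (ka : R) :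
  (0 <= ka)%R -> (forall i, 0 <= f i)%R ->
  \esum_(i in I) (ka * f i)%:E <= ka%:E * \esum_(i in I) (f i)%:E.
Proof.
move=> k0 f0; apply: ge_ereal_sup => _ [F [finF FI]] <-.
rewrite fsbig_finite //=.
under eq_bigr do rewrite EFinM.
rewrite -ge0_sume_distrr; last by move=> i _; rewrite lee_fin.
apply: lee_wpmul2l; first by rewrite lee_fin.
rewrite -fsbig_finite //; apply: esum_ge; exists F => //.
Qed.

Lemma main_ineq : (0 < c u v)%R ->
  \esum_(t in Aset) (mu_joint c v0 l t)%:E <=
  (c u v ^+ 2 * l u * l v)%:E * \esum_(s in Bset) (mu_joint c v0 l s)%:E.
Proof.
move=> cuv.
set m := fun P => (mu_joint c v0 l P)%:E.
have mu0 P : (0 <= mu_joint c v0 l P)%R by apply: (@mu_ge0 _ _ c v0 l c_ge0 l_gt0).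
have m0 P : 0 <= m P by rewrite lee_fin.
have ka0 : (0 <= c u v ^+ 2 * l u * l v)%R.
  by apply: mulr_ge0; [apply: mulr_ge0|]; [apply: exprn_ge0|apply: ltW..].
set J := fun t => Xset `&` [set x | reb x = t].
apply: (le_trans (y := \esum_(t in Aset) \esum_(x in J t) m t)).
  apply: le_esum => t At; have [x [Xx rx]] := exE _ At.
  apply: esum_ge; exists [set x].
    by split; [exact: finite_set1| move=> y ->; split].
  by rewrite fsbig_set1.
rewrite esum_esum; last by move=> *; apply: m0.
rewrite (_ : Aset `*`` J = (fun x => (reb x, x)) @` (Xset `&` (fun x => Aset (reb x)))); last first.
  apply/seteqP; split.
  - move=> [t x] [/= At [Xx rx]]; exists x => //; last by rewrite rx.
    by split=> //; rewrite /= rx.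
  - by move=> _ [x [Xx Ax] <-]; split.
rewrite (esum_image _ _ (fun k => m k.1)); last by move=> x y _ _ [].
rewrite /=.
apply: (le_trans (y := \esum_(x in Xset) m (reb x))).
  rewrite esum_mkcondr; apply: le_esum => x _; case: ifP => // _; exact: m0.
rewrite (eq_esum (b := fun k => m (reb (k.1, k.2)))); last by case.
rewrite /Xset -(esum_esum (a := fun s pq => m (reb (s, pq)))); last by move=> *; apply: m0.
apply: (le_trans (y := \esum_(s in Bset) ((c u v ^+ 2 * l u * l v) * mu_joint c v0 l s)%:E)); last first.
  by apply: esumZ_le.
apply: le_esum => s Bs.
set nu := nvis u s; set nv := nvis v s.
set al := ((c u v ^+ 2 * l u * l v) * mu_joint c v0 l s / (nu%:R * nv%:R))%R.
have al0 : (0 <= al)%R by apply: divr_ge0 => //; apply: mulr_ge0.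
rewrite (eq_esum (b := fun pq => (fun p q => al%:E) pq.1 pq.2)); last first.
  move=> [p q] [/= pu qv].
  have Xx : Xset (s, (p, q)) by split.
  have := exM _ Xx cuv; rewrite /= -/nu -/nv => E.
  have nz : (nu%:R * nv%:R != 0 :> R)%R.
    move: pu qv; rewrite /Pw /= => /andP[ps /eqP pu] /andP[qs /eqP qv].
    rewrite mulf_neq0 // pnatr_eq0 -lt0n /nu /nv /nvis -has_count has_pred1.
      by rewrite -pu mem_nth.
    by rewrite -qv mem_nth.
  by rewrite /m /al -E mulfK.
rewrite -(esum_esum (a := fun p q => al%:E)); last by move=> *; rewrite lee_fin.
rewrite (eq_esum (b := fun p => ((nv%:R * al)%:E))); last first.
  by move=> p _; rewrite esum_count.
rewrite esum_count; last by apply: mulr_ge0.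
rewrite lee_fin /al.
have [->|nz] := eqVneq (nu%:R * nv%:R)%R (0 : R)%R.
  by rewrite invr0 mulr0 !mulr0; apply: mulr_ge0.
by rewrite mulrA mulrC mulfVK.
Qed.

Lemma empty_case : c u v = 0%R -> \esum_(t in Aset) (mu_joint c v0 l t)%:E = 0.
Proof.
move=> c0; apply: esum1 => t [/= ht /OmegaE /and5P[_ _ _ /allP al _]].
exfalso.
have : (0 < count symp (steps t))%N by rewrite -kk ht.
rewrite -has_count => /hasP[[x y] /al /= cxy].
rewrite /symp !xpair_eqE => /orP[/andP[/eqP ex /eqP ey]|/andP[/eqP ex /eqP ey]];
  move: cxy; rewrite ex ey ?c0 ?(c_sym v u) ?c0 ltxx //.
Qed.

End Main.

Theorem lemma4p9 (R : realType) (V : finType) (c : V -> V -> R) (v0 : V)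
    (l : V -> R)
    (c_sym : forall x y, c x y = c y x)
    (c_ge0 : forall x y, 0 <= c x y)
    (c_conn : forall x y, connect (fun a b : V => 0 < c a b) x y)
    (l_gt0 : forall w, 0 < l w)
    (u v : V) (huv : u != v)
    (hsmall : l u * l v * c u v ^+ 2 <= 1 / 16)
    (k : nat) (hk : (184 <= k)%N) :
  nu c v0 l [set P | (kxy u v P + kxy v u P = k.+1)%N]
  <= 1 / 2 * nu c v0 l [set P | (kxy u v P + kxy v u P = k.-1)%N].
Proof.
have hk2 : (1 < k)%N by apply: leq_trans hk.
rewrite /nu.
set m := fun P => (mu_joint c v0 l P)%:E.
have m0 P : (0 <= m P)%E by rewrite lee_fin (@mu_ge0 _ _ c v0 l c_ge0 l_gt0).
set SA := esum _ _; set SB := esum (_ `&` _) _; set SO := esum _ _.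
have SAB : (SA <= (1/2)%:E * SB)%E.
  have SB0 : (0 <= SB)%E by apply: esum_ge0 => x _; apply: m0.
  case: (ltgtP 0 (c u v)) => [cuv||cuv].
  - apply: (le_trans (@main_ineq R V c v0 l c_sym c_ge0 l_gt0 u v huv k hk2 cuv)).
    apply: lee_wpmul2r => //; rewrite lee_fin.
    rewrite (_ : c u v ^+ 2 * l u * l v = l u * l v * c u v ^+ 2); last by ring.
    by apply: (le_trans hsmall); lra.
  - by move=> h; have := c_ge0 u v; rewrite leNgt h.
  - rewrite /SA (@empty_case R V c v0 l c_sym u v huv k) ?cuv //.
    by apply: mule_ge0.
have SO0 : (0 <= SO)%E by apply: esum_ge0 => x _; apply: m0.
have SA0 : (0 <= SA)%E by apply: esum_ge0 => x _; apply: m0.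
have SB0 : (0 <= SB)%E by apply: esum_ge0 => x _; apply: m0.
have subO (I : set (seq V)) : (\esum_(P in I `&` Omega c v0) m P <= SO)%E.
  rewrite esum_mkcondl; apply: le_esum => x _; case: ifP => // _; exact: m0.
have [fO|nfO] := boolP (SO \is a fin_num); last first.
  have -> : fine SO = 0.
    by move: nfO SO0; case: (SO) => //.
  by rewrite invr0 !mulr0.
have fB : SB \is a fin_num.
  by rewrite ge0_fin_numE // (le_lt_trans (subO _)) // -ge0_fin_numE.
have fA : SA \is a fin_num.
  by rewrite ge0_fin_numE // (le_lt_trans (subO _)) // -ge0_fin_numE.
have h : fine SA <= 1 / 2 * fine SB.
  by rewrite -lee_fin EFinM !fineK.
rewrite mulrA; apply: ler_wpM2r => //.
by rewrite invr_ge0 fine_ge0.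
Qed.
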